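(* Let $(X,T)$ be a compact Hausdorff flow in which every point of $X$ is almost automorphic. Then $(X,T)$ is distal, the enveloping semigroup $\mathcal E(X,T)$ is a group, and whenever $\{t_i\}_{i\in I}\subset T$ is a net with $t_i\to g\in\mathcal E(X,T)$ (in the product topology of $X^X$), the net $\{t_i^{-1}\}_{i\in I}$ converges to $g^{-1}\in\mathcal E(X,T)$.
   Context: $X$ compact Hausdorff, $T$ a topological group acting continuously on $X$. A point $x$ is almost automorphic if for every net $\{t_i\}\subset T$ with $t_ix\to y$ it holds that $t_i^{-1}y\to x$. Two points $x,y$ are proximal if there are a net $\{t_i\}\subset T$ and $z\in X$ with $t_ix\to z$ and $t_iy\to z$; the flow is distal if no two distinct points are proximal. The enveloping semigroup $\mathcal E(X,T)$ is the closure of (the maps given by) $T$ in $X^X$ with the product (pointwise convergence) topology, with composition as semigroup operation. *)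

(* Defs.v *)
From Stdlib Require Import List.

Set Implicit Arguments.

Record Topology (X : Type) := {
  is_open : (X -> Prop) -> Prop;
  open_full : is_open (fun _ => True);
  open_inter : forall U V, is_open U -> is_open V -> is_open (fun x => U x /\ V x);
  open_union : forall F : (X -> Prop) -> Prop,
      (forall U, F U -> is_open U) -> is_open (fun x => exists U, F U /\ U x)
}.

Definition continuous (A B : Type) (tA : Topology A) (tB : Topology B) (f : A -> B) : Prop :=
  forall W, is_open tB W -> is_open tA (fun a => W (f a)).

Definition prod_open (A B : Type) (tA : Topology A) (tB : Topology B) (W : A * B -> Prop) : Prop :=
  forall p, W p -> exists U V, is_open tA U /\ is_open tB V /\ U (fst p) /\ V (snd p) /\
      (forall a b, U a -> V b -> W (a, b)).

Definition continuous2 (A B C : Type) (tA : Topology A) (tB : Topology B) (tC : Topology C)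
  (f : A -> B -> C) : Prop :=
  forall W, is_open tC W -> prod_open tA tB (fun p => W (f (fst p) (snd p))).

Definition compact (X : Type) (tX : Topology X) : Prop :=
  forall F : (X -> Prop) -> Prop,
    (forall U, F U -> is_open tX U) -> (forall x, exists U, F U /\ U x) ->
    exists l : list (X -> Prop), (forall U, In U l -> F U) /\
      (forall x, exists U, In U l /\ U x).

Definition hausdorff (X : Type) (tX : Topology X) : Prop :=
  forall x y, x <> y -> exists U V, is_open tX U /\ is_open tX V /\ U x /\ V y /\
      (forall z, U z -> V z -> False).

Record directed (I : Type) (le : I -> I -> Prop) : Prop := {
  dir_refl : forall i, le i i;
  dir_trans : forall i j k, le i j -> le j k -> le i k;
  dir_upper : forall i j, exists k, le i k /\ le j k;
  dir_inhabited : inhabited I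
}.

Definition converges (X : Type) (opn : (X -> Prop) -> Prop) (I : Type) (le : I -> I -> Prop)
  (net : I -> X) (x : X) : Prop :=
  forall U, opn U -> U x -> exists i0, forall i, le i0 i -> U (net i).

(** Open sets of the product (pointwise convergence) topology on X^X. *)
Definition fun_open (X : Type) (tX : Topology X) (W : (X -> X) -> Prop) : Prop :=
  forall f, W f -> exists l : list (X * (X -> Prop)),
    (forall p, In p l -> is_open tX (snd p) /\ snd p (f (fst p))) /\
    (forall g, (forall p, In p l -> snd p (g (fst p))) -> W g).

Record is_group (T : Type) (mul : T -> T -> T) (inv : T -> T) (e : T) : Prop := {
  grp_assoc : forall a b c, mul a (mul b c) = mul (mul a b) c;
  grp_mul1l : forall a, mul e a = a;
  grp_mul1r : forall a, mul a e = a;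
  grp_mulVl : forall a, mul (inv a) a = e;
  grp_mulVr : forall a, mul a (inv a) = e
}.

Definition topological_group (T : Type) (tT : Topology T) (mul : T -> T -> T) (inv : T -> T)
  (e : T) : Prop :=
  is_group mul inv e /\ continuous2 tT tT tT mul /\ continuous tT tT inv.

Definition continuous_action (T X : Type) (tT : Topology T) (tX : Topology X)
  (mul : T -> T -> T) (e : T) (act : T -> X -> X) : Prop :=
  (forall x, act e x = x) /\
  (forall s t x, act (mul s t) x = act s (act t x)) /\
  continuous2 tT tX tX act.

Definition almost_automorphic (T X : Type) (tX : Topology X) (inv : T -> T)
  (act : T -> X -> X) (x : X) : Prop :=
  forall (I : Type) (le : I -> I -> Prop), directed le ->
  forall (t : I -> T) (y : X),
    converges (is_open tX) le (fun i => act (t i) x) y ->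
    converges (is_open tX) le (fun i => act (inv (t i)) y) x.

Definition proximal (T X : Type) (tX : Topology X) (act : T -> X -> X) (x y : X) : Prop :=
  exists (I : Type) (le : I -> I -> Prop) (t : I -> T) (z : X),
    directed le /\
    converges (is_open tX) le (fun i => act (t i) x) z /\
    converges (is_open tX) le (fun i => act (t i) y) z.

Definition distal (T X : Type) (tX : Topology X) (act : T -> X -> X) : Prop :=
  forall x y, proximal tX act x y -> x = y.

(** The enveloping semigroup: closure of {act t | t in T} in X^X. *)
Definition enveloping (T X : Type) (tX : Topology X) (act : T -> X -> X) (g : X -> X) : Prop :=
  forall W, fun_open tX W -> W g -> exists t, W (act t).

Definition enveloping_is_group (T X : Type) (tX : Topology X) (act : T -> X -> X) : Prop :=
  enveloping tX act (fun x => x) /\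
  (forall g h, enveloping tX act g -> enveloping tX act h ->
     enveloping tX act (fun x => g (h x))) /\
  (forall g, enveloping tX act g -> exists h, enveloping tX act h /\
     (forall x, g (h x) = x) /\ (forall x, h (g x) = x)).

(* Main.v *)
Require Import Defs.
From Stdlib Require Import List Classical ClassicalEpsilon FunctionalExtensionality PropExtensionality.

Lemma open_nbhd (X : Type) (tX : Topology X) (S : X -> Prop) :
  (forall x, S x -> exists V, is_open tX V /\ V x /\ forall z, V z -> S z) -> is_open tX S.
Proof.
  intros H.
  assert (E : S = (fun x => exists U, (fun V => is_open tX V /\ forall z, V z -> S z) U /\ U x)).
  { apply functional_extensionality; intro x; apply propositional_extensionality; split.
    - intro Hx. destruct (H x Hx) as [V [HV [Vx HVS]]]. exists V; auto.
    - intros [U [[_ HU] Ux]]. auto. }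
  rewrite E. apply open_union. intros U [HU _]; exact HU.
Qed.

Lemma act_open T X (tT : Topology T) (tX : Topology X) mul e (act : T -> X -> X)
  (Hact : continuous_action tT tX mul e act) t U :
  is_open tX U -> is_open tX (fun y => U (act t y)).
Proof.
  intro HU. destruct Hact as [_ [_ Hc]].
  apply open_nbhd. intros y Hy.
  destruct (Hc U HU (t, y) Hy) as [A [B [HA [HB [At [By HAB]]]]]].
  exists B. split; [exact HB|]. split; [exact By|].
  intros z Bz. exact (HAB t z At Bz).
Qed.

Lemma limit_unique X (tX : Topology X) (HXh : hausdorff tX) I (le : I -> I -> Prop)
  (Hd : directed le) (u : I -> X) a b :
  converges (is_open tX) le u a -> converges (is_open tX) le u b -> a = b.
Proof.
  intros Ha Hb. apply NNPP. intro Hab.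
  destruct (HXh a b Hab) as [U [V [HU [HV [Ua [Vb HUV]]]]]].
  destruct (Ha U HU Ua) as [i0 Hi0]. destruct (Hb V HV Vb) as [i1 Hi1].
  destruct (dir_upper Hd i0 i1) as [k [Hk0 Hk1]].
  exact (HUV _ (Hi0 k Hk0) (Hi1 k Hk1)).
Qed.

Lemma pointwise X (tX : Topology X) I (le : I -> I -> Prop) (f : I -> X -> X) g :
  converges (fun_open tX) le f g -> forall x, converges (is_open tX) le (fun i => f i x) (g x).
Proof.
  intros H x U HU Ux.
  destruct (H (fun k => U (k x))) as [i0 Hi0].
  - intros k Hk. exists ((x, U) :: nil). split.
    + intros p [<-|[]]. simpl. auto.
    + intros k' Hk'. apply (Hk' (x, U)). left; reflexivity.
  - exact Ux.
  - exists i0. intros i Hi. exact (Hi0 i Hi).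
Qed.

Lemma limit_env T X (tX : Topology X) (act : T -> X -> X) I (le : I -> I -> Prop)
  (Hd : directed le) t h :
  converges (fun_open tX) le (fun i => act (t i)) h -> enveloping tX act h.
Proof.
  intros H W HW Wh. destruct (H W HW Wh) as [i0 Hi0]. exists (t i0). apply Hi0. apply (dir_refl Hd).
Qed.

Lemma env_net T X (tX : Topology X) (act : T -> X -> X) g :
  enveloping tX act g -> exists (I : Type) (le : I -> I -> Prop) (t : I -> T),
    directed le /\ converges (fun_open tX) le (fun i => act (t i)) g.
Proof.
  intro Hg.
  assert (Ht : forall W : {W : (X -> X) -> Prop | fun_open tX W /\ W g},
             {t : T | proj1_sig W (act t)}).
  { intros [W [HW Wg]]. apply constructive_indefinite_description. exact (Hg W HW Wg). }
  exists {W : (X -> X) -> Prop | fun_open tX W /\ W g}.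
  exists (fun W1 W2 => forall f, proj1_sig W2 f -> proj1_sig W1 f).
  exists (fun W => proj1_sig (Ht W)). split.
  - constructor.
    + intros i f Hf; exact Hf.
    + intros i j k Hij Hjk f Hf. apply Hij, Hjk, Hf.
    + intros [W1 [H1 G1]] [W2 [H2 G2]].
      assert (Ho : fun_open tX (fun f => W1 f /\ W2 f)).
      { intros f [F1 F2]. destruct (H1 f F1) as [l1 [A1 B1]]. destruct (H2 f F2) as [l2 [A2 B2]].
        exists (l1 ++ l2). split.
        - intros p Hp. apply in_app_or in Hp. destruct Hp; auto.
        - intros k Hk. split; [apply B1 | apply B2]; intros p Hp; apply Hk, in_or_app; auto. }
      exists (exist _ (fun f => W1 f /\ W2 f) (conj Ho (conj G1 G2))).
      split; intros f Hf; simpl in *; tauto.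
    + constructor. exists (fun _ => True). split.
      * intros f _. exists nil. split; [intros p []| auto].
      * exact I.
  - intros U HU Ug. exists (exist _ U (conj HU Ug)).
    intros W HW. apply HW. exact (proj2_sig (Ht W)).
Qed.

Lemma cluster X (tX : Topology X) (HXc : compact tX) I (le : I -> I -> Prop)
  (Hd : directed le) (u : I -> X) :
  exists x, forall U, is_open tX U -> U x -> forall i, exists j, le i j /\ U (u j).
Proof.
  apply NNPP. intro Hn.
  pose (F := fun U => is_open tX U /\ exists i, forall j, le i j -> ~ U (u j)).
  assert (Hcov : forall x, exists U, F U /\ U x).
  { intro x. apply NNPP. intro Hx. apply Hn. exists x. intros U HU Ux i.
    apply NNPP. intro Hj. apply Hx. exists U. split; [|exact Ux]. split; [exact HU|].
    exists i. intros j Hij HUj. apply Hj. exists j. auto. }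
  destruct (HXc F (fun U HU => proj1 HU) Hcov) as [l [Hl Hlc]].
  assert (Hk : exists k, forall U, In U l -> forall j, le k j -> ~ U (u j)).
  { clear Hlc. induction l as [|U l IH].
    - destruct (dir_inhabited Hd) as [k]. exists k. intros U [].
    - destruct IH as [k1 Hk1]. { intros V HV. apply Hl. right; exact HV. }
      destruct (proj2 (Hl U (or_introl eq_refl))) as [i Hi].
      destruct (dir_upper Hd k1 i) as [k [Hk1' Hik]].
      exists k. intros V [<-|HV] j Hkj.
      + apply Hi. apply (dir_trans Hd _ _ _ Hik Hkj).
      + apply (Hk1 V HV). apply (dir_trans Hd _ _ _ Hk1' Hkj). }
  destruct Hk as [k Hk]. destruct (Hlc (u k)) as [U [HU Uk]].
  exact (Hk U HU k (dir_refl Hd k) Uk).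
Qed.

Lemma inv_conv T X (tX : Topology X) (inv : T -> T) (act : T -> X -> X)
  (Haa : forall x, almost_automorphic tX inv act x) g h
  (Hgh : forall x, g (h x) = x) I (le : I -> I -> Prop) (t : I -> T) (Hd : directed le) :
  converges (fun_open tX) le (fun i => act (t i)) g ->
  converges (fun_open tX) le (fun i => act (inv (t i))) h.
Proof.
  intros Hc.
  assert (Hp : forall y, converges (is_open tX) le (fun i => act (inv (t i)) y) (h y)).
  { intro y. pose proof (@pointwise X tX I le _ g Hc (h y)) as H. simpl in H. rewrite Hgh in H.
    exact (Haa (h y) I le Hd t y H). }
  intros W HW Wh. destruct (HW h Wh) as [l [Hl HlW]].
  assert (Hk : exists k, forall i, le k i -> forall p, In p l -> snd p (act (inv (t i)) (fst p))).
  { clear HlW. induction l as [|p l IH].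
    - destruct (dir_inhabited Hd) as [k]. exists k. intros i _ p [].
    - destruct IH as [k1 Hk1]. { intros q Hq; apply Hl; right; exact Hq. }
      destruct (Hl p (or_introl eq_refl)) as [Ho Hph].
      destruct (Hp (fst p) (snd p) Ho Hph) as [k2 Hk2].
      destruct (dir_upper Hd k1 k2) as [k [A B]].
      exists k. intros i Hki q [<-|Hq].
      + apply Hk2. eapply (dir_trans Hd); eauto.
      + apply Hk1; auto. eapply (dir_trans Hd); eauto. }
  destruct Hk as [k Hk]. exists k. intros i Hi. apply HlW. intros p Hq. apply Hk; assumption.
Qed.

Lemma inv_inv T mul (inv : T -> T) e (G : is_group mul inv e) a : inv (inv a) = a.
Proof.
  rewrite <- (grp_mul1r G (inv (inv a))). rewrite <- (grp_mulVl G a).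
  rewrite (grp_assoc G). rewrite (grp_mulVl G). apply (grp_mul1l G).
Qed.

Lemma conv_ext X (opn : (X -> Prop) -> Prop) I (le : I -> I -> Prop) (u v : I -> X) x :
  (forall i, u i = v i) -> converges opn le u x -> converges opn le v x.
Proof.
  intros E H U HU Ux. destruct (H U HU Ux) as [i0 Hi0]. exists i0. intros i Hi. rewrite <- E. auto.
Qed.

Theorem mainTheorem2 (T X : Type) (tT : Topology T) (tX : Topology X)
  (mul : T -> T -> T) (inv : T -> T) (e : T) (act : T -> X -> X)
  (HT : topological_group tT mul inv e)
  (Hact : continuous_action tT tX mul e act)
  (HXc : compact tX) (HXh : hausdorff tX)
  (Haa : forall x : X, almost_automorphic tX inv act x) :
  distal tX act /\
  enveloping_is_group tX act /\
  (forall g h : X -> X,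
     enveloping tX act g -> enveloping tX act h ->
     (forall x, g (h x) = x) -> (forall x, h (g x) = x) ->
     forall (I : Type) (le : I -> I -> Prop) (t : I -> T),
       directed le ->
       converges (fun_open tX) le (fun i => act (t i)) g ->
       converges (fun_open tX) le (fun i => act (inv (t i))) h).
Proof.
  destruct HT as [HG _].
  assert (Hdist : distal tX act).
  { intros x y [I [le [t [z [Hd [Hx Hy]]]]]].
    pose proof (Haa x I le Hd t z Hx) as A. pose proof (Haa y I le Hd t z Hy) as B.
    exact (@limit_unique X tX HXh I le Hd _ _ _ A B). }
  split; [exact Hdist|]. split.
  2:{ intros g h _ _ Hgh _ I le t Hd Hc. exact (@inv_conv T X tX inv act Haa g h Hgh I le t Hd Hc). }
  split; [|split].
  - intros W HW Wid. exists e.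
    replace (act e) with (fun x : X => x); [exact Wid|].
    apply functional_extensionality. intro x. symmetry. apply (proj1 Hact).
  - assert (StepA : forall t h, enveloping tX act h -> enveloping tX act (fun x => act t (h x))).
    { intros t h Hh W HW Wh.
      destruct (Hh (fun f => W (fun x => act t (f x)))) as [s Hs].
      - intros f Hf. destruct (HW _ Hf) as [l [Hl HlW]].
        exists (map (fun p => (fst p, fun y => snd p (act t y))) l). split.
        + intros q Hq. apply in_map_iff in Hq. destruct Hq as [p [<- Hp]]. simpl.
          destruct (Hl p Hp) as [Ho Hv]. split; [|exact Hv].
          exact (@act_open T X tT tX mul e act Hact t _ Ho).
        + intros k Hk. apply HlW. intros p Hp.
          apply (Hk (fst p, fun y => snd p (act t y))). apply in_map_iff. exists p; auto.
      - exact Wh.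
      - exists (mul t s). replace (act (mul t s)) with (fun x => act t (act s x)); [exact Hs|].
        apply functional_extensionality. intro x. symmetry. apply (proj1 (proj2 Hact)). }
    intros g h Hg Hh W HW Wgh.
    destruct (Hg (fun f => W (fun x => f (h x)))) as [t Ht].
    + intros f Hf. destruct (HW _ Hf) as [l [Hl HlW]].
      exists (map (fun p => (h (fst p), snd p)) l). split.
      * intros q Hq. apply in_map_iff in Hq. destruct Hq as [p [<- Hp]]. simpl. apply Hl; exact Hp.
      * intros k Hk. apply HlW. intros p Hp.
        apply (Hk (h (fst p), snd p)). apply in_map_iff. exists p; auto.
    + exact Wgh.
    + exact (StepA t h Hh W HW Ht).
  - intros g Hg.
    destruct (@env_net T X tX act g Hg) as [I [le [t [Hd Hc]]]].
    assert (Hsurj : forall y, exists x, g x = y).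
    { intro y.
      destruct (@cluster X tX HXc I le Hd (fun i => act (inv (t i)) y)) as [x Hx].
      assert (Hphi : forall p : {p : I * (X -> Prop) | is_open tX (snd p) /\ snd p x},
                 {j : I | le (fst (proj1_sig p)) j /\ snd (proj1_sig p) (act (inv (t j)) y)}).
      { intros [[i U] [HU Ux]]. apply constructive_indefinite_description. exact (Hx U HU Ux i). }
      set (J := {p : I * (X -> Prop) | is_open tX (snd p) /\ snd p x}).
      set (leJ := fun p q : J => le (fst (proj1_sig p)) (fst (proj1_sig q)) /\
                   forall z, snd (proj1_sig q) z -> snd (proj1_sig p) z).
      assert (HdJ : directed leJ).
      { constructor.
        - intro p. split; [apply (dir_refl Hd)|auto].
        - intros p q r [A1 B1] [A2 B2]. split; [eapply (dir_trans Hd); eauto|auto].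
        - intros [[i U] [HU Ux]] [[j V] [HV Vx]].
          destruct (dir_upper Hd i j) as [k [Hik Hjk]].
          exists (exist _ (k, fun z => U z /\ V z) (conj (open_inter tX U V HU HV) (conj Ux Vx)) : J).
          unfold leJ; simpl. split; split; auto; intros z [? ?]; auto.
        - destruct (dir_inhabited Hd) as [i0].
          constructor. exact (exist _ (i0, fun _ => True) (conj (open_full tX) Logic.I) : J). }
      set (phi := fun p : J => proj1_sig (Hphi p)).
      assert (C1 : converges (is_open tX) leJ (fun p => act (inv (t (phi p))) y) x).
      { intros U HU Ux. destruct (dir_inhabited Hd) as [i0].
        exists (exist _ (i0, U) (conj HU Ux) : J).
        intros p [_ Hp]. apply Hp. exact (proj2 (proj2_sig (Hphi p))). }
      pose proof (Haa y J leJ HdJ (fun p => inv (t (phi p))) x C1) as C2.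
      assert (C3 : converges (is_open tX) leJ (fun p => act (t (phi p)) x) y).
      { apply (@conv_ext X (is_open tX) J leJ (fun p => act (inv (inv (t (phi p)))) x)); [|exact C2].
        intro p. rewrite (@inv_inv T mul inv e HG). reflexivity. }
      assert (C4 : converges (is_open tX) leJ (fun p => act (t (phi p)) x) (g x)).
      { intros U HU Ux.
        destruct (@pointwise X tX I le _ g Hc x U HU Ux) as [i0 Hi0].
        exists (exist _ (i0, fun _ => True) (conj (open_full tX) Logic.I) : J).
        intros p [Hp _]. apply Hi0. eapply (dir_trans Hd); [exact Hp|].
        exact (proj1 (proj2_sig (Hphi p))). }
      exists x. exact (@limit_unique X tX HXh J leJ HdJ _ _ _ C4 C3). }
    pose (h := fun y => proj1_sig (constructive_indefinite_description _ (Hsurj y))).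
    assert (Hgh : forall y, g (h y) = y).
    { intro y. unfold h. exact (proj2_sig (constructive_indefinite_description _ (Hsurj y))). }
    exists h. split; [|split; [exact Hgh|]].
    + exact (@limit_env T X tX act I le Hd (fun i => inv (t i)) h (@inv_conv T X tX inv act Haa g h Hgh I le t Hd Hc)).
    + intro x. apply Hdist. exists I, le, t, (g x). split; [exact Hd|].
      split.
      * pose proof (@pointwise X tX I le _ g Hc (h (g x))) as P. rewrite Hgh in P. exact P.
      * exact (@pointwise X tX I le _ g Hc x).
Qed.
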